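(* Let $w$ be a string of length $n$ and $i$ a position of $w$ with $i-\mu(i)\ge1$, $i+\mu(i)-1\le n$ and $\mu(i)>1$. Then there exists an integer $j$ with $i<j<i+\mu(i)$ such that either $\mu(j)=\mu(i)$ or $\mu(j)\ge 2\mu(i)$.
   Context: For a position $i\in\{1,\dots,n\}$ of $w$, the local period $\mu(i)$ is the least positive integer $\mu$ such that $w[j]=w[j+\mu]$ for all $j$ with $\max\{1,i-\mu\}\le j$ and $j+\mu\le\min\{n,i+\mu-1\}$. *)

(* Defs.v *)
From mathcomp Require Import all_boot.
Set Implicit Arguments. Unset Strict Implicit. Unset Printing Implicit Defensive.

(* Words are sequences w : seq T over an eqType alphabet; positions are
   1-based: the letter at position p (1 <= p <= size w) is nth x0 w p.-1. *)
Definition letter (T : eqType) (w : seq T) (p : nat) : option T :=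
  nth None (map Some w) p.-1.

Definition lp_cond (T : eqType) (w : seq T) (i m : nat) : bool :=
  [forall j : 'I_(size w).+1,
     ((maxn 1 (i - m) <= j) && (j + m <= minn (size w) (i + m - 1)))
       ==> (letter w j == letter w (j + m))].

Lemma lp_cond_exists (T : eqType) (w : seq T) (i : nat) :
  exists m, (0 < m) && lp_cond w i m.
Proof.
exists (size w).+1; apply/andP; split => //.
apply/forallP => j; apply/implyP => /andP [_ H].
exfalso; move: H; rewrite leq_min => /andP [H _].
by rewrite addnS ltnNge leq_addl in H.
Qed.

Definition mu (T : eqType) (w : seq T) (i : nat) : nat :=
  ex_minn (lp_cond_exists w i).

(* Main.v *)
Require Import Defs.
From mathcomp Require Import all_boot.
From mathcomp Require Import zify.
Set Implicit Arguments. Unset Strict Implicit. Unset Printing Implicit Defensive.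

Fixpoint lexle (lt : rel nat) (s t : seq nat) : bool :=
  match s, t with
  | [::], _ => true
  | _ :: _, [::] => false
  | a :: s', b :: t' => lt a b || (a == b) && lexle lt s' t'
  end.

Section Lex.
Variable lt : rel nat.
Hypothesis asym : forall a b, lt a b -> lt b a -> False.
Lemma irr a : lt a a = false.
Proof. by apply/negP => h; apply: (asym h h). Qed.

Lemma lexle_nil s : lexle lt [::] s.
Proof. by case: s. Qed.

Lemma lexle_refl s : lexle lt s s.
Proof. by elim: s => //= a s ->; rewrite eqxx orbT. Qed.

Lemma lexle_cat z s t : lexle lt (z ++ s) (z ++ t) = lexle lt s t.
Proof. by elim: z => //= a z ->; rewrite eqxx irr. Qed.

Lemma lexle_prefix s t : lexle lt s (s ++ t).
Proof. by rewrite -{1}(cats0 s) lexle_cat lexle_nil. Qed.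

Lemma lexle_anti s t : lexle lt s t -> lexle lt t s -> s = t.
Proof.
elim: s t => [|a s IH] [|b t] //=.
move=> /orP[lab|/andP[/eqP eab H1]] /orP[lba|/andP[/eqP eba H2]].
- by case: (asym lab lba).
- by subst; rewrite irr in lab.
- by subst; rewrite irr in lba.
- by subst; rewrite (IH _ H1 H2).
Qed.

Hypothesis total : forall a b, a != b -> lt a b || lt b a.
Hypothesis trans : forall a b c, lt a b -> lt b c -> lt a c.

Lemma lexle_total s t : lexle lt s t || lexle lt t s.
Proof.
elim: s t => [|a s IH] [|b t] //=.
case: (eqVneq a b) => [<-|neq]; first by rewrite irr /=.
by case/orP: (total neq) => ->; rewrite ?orbT.
Qed.

Lemma lexle_trans s t u : lexle lt s t -> lexle lt t u -> lexle lt s u.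
Proof.
elim: s t u => [|a s IH] [|b t] [|c u] //=.
move=> /orP[lab|/andP[/eqP eab H1]] /orP[lbc|/andP[/eqP ebc H2]].
- by rewrite (trans lab lbc).
- by subst; rewrite lab.
- by subst; rewrite lbc.
- by subst; rewrite eqxx (IH _ _ H1 H2) orbT.
Qed.
End Lex.

Lemma lexle_flip (lt lt' : rel nat) :
  (forall a b, lt a b -> lt b a -> False) -> (forall x y, lt' x y = lt y x) ->
  forall s t, lexle lt s t -> lexle lt' s t -> exists v, t = s ++ v.
Proof.
move=> asym hf; elim=> [|a s IH]; first by move=> t _ _; exists t.
case=> [|b t] //=.
rewrite hf => /orP[lab|/andP[/eqP eab H1]] /orP[lba|/andP[/eqP eba H2]].
- by case: (asym _ _ lab lba).
- by subst; rewrite (irr asym) in lab.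
- by subst; rewrite (irr asym) in lba.
- by subst; case: (IH _ H1 H2) => v ->; exists v.
Qed.

Lemma exists_max (R : rel nat) :
  (forall a b c, R a b -> R b c -> R a c) -> (forall a b, R a b || R b a) ->
  forall n, 0 < n -> exists k, k < n /\ forall a, a < n -> R a k.
Proof.
move=> tr tot; elim=> [//|n IH] _.
case: n IH => [|n] IH.
  exists 0; split => // a; rewrite ltnS leqn0 => /eqP ->.
  by case/orP: (tot 0 0).
case: (IH erefl) => k [kn Hk].
case Rnk: (R n.+1 k).
  exists k; split; first by apply: ltnW.
  move=> a; rewrite ltnS leq_eqVlt => /orP[/eqP -> //|]; exact: Hk.
have Rkn : R k n.+1 by case/orP: (tot k n.+1) => //; rewrite Rnk.
exists n.+1; split => // a; rewrite ltnS leq_eqVlt => /orP[/eqP -> |/Hk h].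
  by case/orP: (tot n.+1 n.+1).
exact: tr h Rkn.
Qed.
Definition suf (f : nat -> nat) p a := map f (iota a (p - a)).

Lemma size_suf f p a : size (suf f p a) = p - a.
Proof. by rewrite size_map size_iota. Qed.

Lemma suf_split f p a b : a <= b -> b <= p ->
  suf f p a = map f (iota a (b - a)) ++ suf f p b.
Proof.
move=> ab bp; rewrite /suf -map_cat.
have -> : p - a = (b - a) + (p - b) by lia.
rewrite iotaD; have -> : a + (b - a) = b by lia. by [].
Qed.

Lemma map_shift (f : nat -> nat) a b n : (forall d, d < n -> f (a + d) = f (b + d)) ->
  map f (iota a n) = map f (iota b n).
Proof.
elim: n a b => [//|n IH] a b H /=.
have := H 0 erefl; rewrite !addn0 => ->; congr cons; apply: IH => d dn.
by have := H d.+1 dn; rewrite !addnS.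
Qed.

Lemma nth_suf f p a d : d < p - a -> nth 0 (suf f p a) d = f (a + d).
Proof. by move=> h; rewrite (nth_map 0) ?size_iota // nth_iota. Qed.

Lemma suf_p f p : suf f p p = [::].
Proof. by rewrite /suf subnn. Qed.

Lemma core (lt lt' : rel nat) (f : nat -> nat) (p k k' : nat) :
  (forall a b, lt a b -> lt b a -> False) ->
  (forall x y, lt' x y = lt y x) ->
  k' < k -> k < p ->
  (forall a, a < p -> lexle lt (suf f p a) (suf f p k)) ->
  (forall a, a < p -> lexle lt' (suf f p a) (suf f p k')) ->
  (forall r, 0 < r < p -> ~ (forall y, y < r -> f (p - r + y) = f y)) ->
  forall r, 0 < r < p ->
    ~ (forall x, k <= x + r -> x < k -> x + r < p -> f x = f (x + r)).
Proof.
move=> asym hf kk' kp Hmax Hmax' Hub r /andP[r0 rp] H.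
have asym' : forall a b, lt' a b -> lt' b a -> False.
  by move=> a b; rewrite !hf => h1 h2; exact: (asym _ _ h2 h1).
have border : (forall x, x + r < p -> f x = f (x + r)) -> False.
  move=> Hall; apply: (Hub (p - r)); first by apply/andP; lia.
  move=> y yl; have -> : p - (p - r) + y = y + r by lia.
  by rewrite -Hall //; lia.
case: (leqP r k) => rk.
  case: (leqP r (p - k)) => rm.
    have E1 := suf_split f (leq_subr r k) (ltnW kp).
    have E2 : suf f p k = map f (iota k r) ++ suf f p (k + r).
      by rewrite (@suf_split f p k (k + r)) ?leq_addr //; [rewrite addKn | lia].
    have Z : map f (iota (k - r) (k - (k - r))) = map f (iota k r).
      have -> : k - (k - r) = r by lia.
      apply: map_shift => d dr.
      have := H (k - r + d); have -> : k - r + d + r = k + d by lia.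
      by apply; lia.
    have L1 := Hmax (k - r) (leq_ltn_trans (leq_subr r k) kp).
    rewrite E1 Z {2}E2 lexle_cat in L1; last exact: asym.
    have L2 : lexle lt (suf f p (k + r)) (suf f p k).
      case: (ltnP (k + r) p) => h; first exact: Hmax.
      have -> : k + r = p by lia.
      by rewrite suf_p lexle_nil.
    have := lexle_anti asym L1 L2 => /(congr1 size); rewrite !size_suf; lia.
  have E1 : suf f p (k - r) = suf f p k ++ suf f p (p - r).
    rewrite (@suf_split f p (k - r) (p - r)); [|lia|lia].
    have -> : p - r - (k - r) = p - k by lia.
    congr (_ ++ _); apply: map_shift => d dr.
    have := H (k - r + d); have -> : k - r + d + r = k + d by lia.
    by apply; lia.
  have L1 := Hmax (k - r) (leq_ltn_trans (leq_subr r k) kp).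
  rewrite E1 in L1.
  have := lexle_anti asym L1 (lexle_prefix asym _ _).
  move=> /(congr1 size); rewrite size_cat !size_suf; lia.
have Hlow : forall x, x < k -> x + r < p -> f x = f (x + r).
  by move=> x xk xr; apply: H => //; lia.
case: (leqP (k + r) p) => krp; last first.
  by apply: border => x xr; apply: Hlow => //; lia.
have E1 : suf f p k' = map f (iota k' (k - k')) ++ suf f p k.
  by rewrite (@suf_split f p k' k) //; [lia | lia].
have E2 : suf f p (k' + r) = map f (iota k' (k - k')) ++ suf f p (k + r).
  rewrite (@suf_split f p (k' + r) (k + r)); [|lia|lia].
  have -> : k + r - (k' + r) = k - k' by lia.
  congr (_ ++ _); apply: map_shift => d dr.
  rewrite (Hlow (k' + d)); [congr f; lia | lia | lia].
have L1 := Hmax' (k' + r) ltac:(lia).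
rewrite E2 E1 lexle_cat in L1; last exact: asym'.
have L2 : lexle lt (suf f p (k + r)) (suf f p k).
  case: (ltnP (k + r) p) => h; first exact: Hmax.
  have -> : k + r = p by lia.
      by rewrite suf_p lexle_nil.
have [v Ev] := lexle_flip asym hf L2 L1.
apply: border => x xr.
case: (ltnP x k) => xk; first exact: Hlow.
have hsz : x - k < p - (k + r) by lia.
have := congr1 (fun s => nth 0 s (x - k)) Ev => /=.
rewrite nth_cat size_suf hsz nth_suf ?nth_suf; [|lia|lia].
have -> : k + (x - k) = x by lia.
by move=> ->; congr f; lia.
Qed.
Definition gtn' : rel nat := fun a b => b < a.

Lemma ltn_asym' : forall a b, ltn a b -> ltn b a -> False.
Proof. by move=> a b h1 h2; move: (ltn_trans h1 h2); rewrite ltnn. Qed.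
Lemma gtn_asym' : forall a b, gtn' a b -> gtn' b a -> False.
Proof. by move=> a b h1 h2; exact: (ltn_asym' h1 h2). Qed.
Lemma ltn_tot' : forall a b, a != b -> ltn a b || ltn b a.
Proof. by move=> a b; rewrite neq_ltn. Qed.
Lemma gtn_tot' : forall a b, a != b -> gtn' a b || gtn' b a.
Proof. by move=> a b; rewrite /gtn' neq_ltn orbC. Qed.
Lemma ltn_tr' : forall a b c, ltn a b -> ltn b c -> ltn a c.
Proof. by move=> a b c; apply: ltn_trans. Qed.
Lemma gtn_tr' : forall a b c, gtn' a b -> gtn' b c -> gtn' a c.
Proof. by move=> a b c h1 h2; exact: (ltn_trans h2 h1). Qed.

Lemma cft (f : nat -> nat) (p : nat) : 1 < p ->
  (forall r, 0 < r < p -> ~ (forall y, y < r -> f (p - r + y) = f y)) ->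
  exists k, 0 < k < p /\ forall r, 0 < r < p ->
    ~ (forall x, k <= x + r -> x < k -> x + r < p -> f x = f (x + r)).
Proof.
move=> p1 Hub.
have p0 : 0 < p by lia.
have [k1 [k1p H1]] := @exists_max (fun a b => lexle ltn (suf f p a) (suf f p b))
  (fun a b c => @lexle_trans _ ltn_tr' _ _ _)
  (fun a b => @lexle_total _ ltn_asym' ltn_tot' _ _) p p0.
have [k2 [k2p H2]] := @exists_max (fun a b => lexle gtn' (suf f p a) (suf f p b))
  (fun a b c => @lexle_trans _ gtn_tr' _ _ _)
  (fun a b => @lexle_total _ gtn_asym' gtn_tot' _ _) p p0.
have hf1 : forall x y, gtn' x y = ltn y x by [].
have hf2 : forall x y, ltn x y = gtn' y x by [].
case: (ltngtP k1 k2) => hk.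
- exists k2; split; first by apply/andP; lia.
  exact: (core gtn_asym' hf2 hk k2p H2 H1 Hub).
- exists k1; split; first by apply/andP; lia.
  exact: (core ltn_asym' hf1 hk k1p H1 H2 Hub).
- exfalso; subst k2; clear k2p.
  case: k1 k1p H1 H2 => [|k] kp H1 H2.
    have [v Ev] := lexle_flip ltn_asym' hf1 (H1 1 p1) (H2 1 p1).
    apply: (Hub (p - 1)); first by apply/andP; lia.
    move=> y yl.
    have := congr1 (fun s => nth 0 s y) Ev => /=.
    rewrite nth_cat size_suf yl !nth_suf; [|lia|lia].
    by have -> : p - (p - 1) = 1 by lia.
  have [v Ev] := lexle_flip ltn_asym' hf1 (H1 0 p0) (H2 0 p0).
  have := congr1 size Ev; rewrite size_cat !size_suf; lia.
Qed.
Section Main.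
Variable T : eqType.

Lemma lpP (w : seq T) i m : lp_cond w i m <->
  (forall x, maxn 1 (i - m) <= x -> x + m <= minn (size w) (i + m - 1) ->
     letter w x = letter w (x + m)).
Proof.
split.
  move/forallP => H x h1 h2.
  have xn : x < (size w).+1 by lia.
  by have := H (Ordinal xn); rewrite /= h1 h2 /= => /eqP.
move=> H; apply/forallP => j; apply/implyP => /andP[h1 h2]; apply/eqP.
exact: H.
Qed.

Lemma mu_spec (w : seq T) i : 0 < mu w i /\ lp_cond w i (mu w i) /\
  (forall m, 0 < m -> lp_cond w i m -> mu w i <= m).
Proof.
rewrite /mu; case: ex_minnP => m /andP[m0 Hm] Hmin; do !split => //.
by move=> k k0 Hk; apply: Hmin; rewrite k0 Hk.
Qed.

Definition code (w : seq T) (y : option T) := index y (map Some w).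

Lemma code_inj (w : seq T) a b : 1 <= a <= size w -> 1 <= b <= size w ->
  code w (letter w a) = code w (letter w b) -> letter w a = letter w b.
Proof.
move=> ha hb E.
have Ia : letter w a \in map Some w by apply: mem_nth; rewrite size_map; lia.
have Ib : letter w b \in map Some w by apply: mem_nth; rewrite size_map; lia.
by rewrite -(nth_index None Ia) -(nth_index None Ib) -/(code w _) E.
Qed.

End Main.

Theorem lemma8 (T : eqType) (w : seq T) (i : nat) :
  1 <= i <= size w ->
  1 <= i - mu w i ->
  i + mu w i - 1 <= size w ->
  1 < mu w i ->
  exists j : nat, i < j < i + mu w i /\
    (mu w j = mu w i \/ 2 * mu w i <= mu w j).
Proof.
move=> /andP[i1 iN] hip hin hp.
have [p0 [Hp Hpmin]] := mu_spec w i.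
set p := mu w i in hip hin hp p0 Hp Hpmin *.
set n := size w in iN hin.
have B : forall x, i - p <= x -> x < i -> letter w x = letter w (x + p).
  move=> x h1 h2; apply: (proj1 (lpP w i p) Hp); rewrite /n in hin; lia.
have notlp : forall r, 0 < r < p -> ~ lp_cond w i r.
  move=> r /andP[r0 rp] H; have := Hpmin r r0 H; lia.
pose f := fun x => code w (letter w (i + x)).
have Hub : forall r, 0 < r < p -> ~ (forall y, y < r -> f (p - r + y) = f y).
  move=> r /andP[r0 rp] Hy; apply: (notlp r); first by apply/andP.
  apply/lpP => x h1 h2.
  rewrite B; [|lia|lia].
  have := Hy (x - (i - r)) ltac:(lia); rewrite /f => /code_inj.
  have -> : i + (p - r + (x - (i - r))) = x + p by lia.
  have -> : i + (x - (i - r)) = x + r by lia.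
  by apply; rewrite -/n; lia.
have [k [/andP[k0 kp] Hk]] := cft hp Hub.
exists (i + k); split; first by apply/andP; lia.
have [q0 [Hq Hqmin]] := mu_spec w (i + k).
set q := mu w (i + k) in q0 Hq Hqmin *.
have pq : p <= q.
  rewrite leqNgt; apply/negP => qp.
  apply: (Hk q); first by apply/andP.
  move=> x h1 h2 h3.
  have := proj1 (lpP w (i + k) q) Hq (i + x); rewrite /f => ->; last first.
  - rewrite -/n; lia.
  - lia.
  by rewrite addnA.
case: (eqVneq q p) => [->|qnp]; first by left.
right; rewrite leqNgt; apply/negP => q2p.
have pq' : p < q by lia.
have A : forall y, maxn 1 (i + k - q) <= y -> y + q <= minn n (i + k + q - 1) ->
    letter w y = letter w (y + q) := proj1 (lpP w (i + k) q) Hq.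
case: (leqP (i + (q - p)) (i + k)) => hj.
  have : q <= q - p; last by lia.
  apply: Hqmin; first by lia.
  apply/lpP => x h1 h2.
  rewrite -/n in h2.
  have := B (x - p) ltac:(lia) ltac:(lia).
  have -> : x - p + p = x by lia.
  move=> <-; rewrite A; [|lia|lia].
  by have -> : x - p + q = x + (q - p) by lia.
have : p <= 2 * p - q; last by lia.
apply: Hpmin; first by lia.
apply/lpP => y h1 h2.
rewrite -/n in h2.
rewrite B; [|lia|lia].
have := A (y + (2 * p - q) - p) ltac:(lia) ltac:(lia).
have -> : y + (2 * p - q) - p + q = y + p by lia.
move=> <-.
rewrite B; [|lia|lia].
by have -> : y + (2 * p - q) - p + p = y + (2 * p - q) by lia.
Qed.
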